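(* Let $n$ be a positive integer and $N$ an even non-negative integer. Then $N$ has a potentially connected graphical partition with exactly $n$ parts if and only if $N$ has a forcibly connected graphical partition with exactly $n$ parts.
   Context: A partition of an integer $N$ is a non-increasing sequence of positive integers summing to $N$; its terms are its parts. A partition is graphical if it is the vertex degree sequence of some simple graph (finite, undirected, no loops or multiple edges); such a graph is a realization. A graphical partition is potentially connected if at least one of its realizations is connected, and forcibly connected if all of its realizations are connected. *)

(* Defs.v *)
From mathcomp Require Import all_boot.
Set Implicit Arguments. Unset Strict Implicit. Unset Printing Implicit Defensive.

Definition is_partition (N : nat) (d : seq nat) : bool :=
  [&& sorted geq d, all (fun x => 0 < x) d & sumn d == N].

Definition simple_graph (n : nat) (e : rel 'I_n) : Prop :=
  symmetric e /\ irreflexive e.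

Definition realizes (d : seq nat) (e : rel 'I_(size d)) : Prop :=
  simple_graph e /\ forall i : 'I_(size d), #|[pred j | e i j]| = nth 0 d i.

Definition graph_connected (n : nat) (e : rel 'I_n) : Prop :=
  forall x y : 'I_n, connect e x y.

Definition graphical (d : seq nat) : Prop :=
  exists e : rel 'I_(size d), realizes e.

Definition potentially_connected (d : seq nat) : Prop :=
  graphical d /\ exists e : rel 'I_(size d), realizes e /\ graph_connected e.

Definition forcibly_connected (d : seq nat) : Prop :=
  graphical d /\ forall e : rel 'I_(size d), realizes e -> graph_connected e.

(* Main.v *)
Require Import Defs.
From mathcomp Require Import all_boot zify.

Lemma card_ord_count n (P : pred nat) :
  #|[pred j : 'I_n | P j]| = count P (iota 0 n).
Proof.
rewrite -val_enum_ord count_map cardE /enum_mem size_filter.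
rewrite (@eq_filter _ _ predT) // filter_predT.
by apply: eq_count.
Qed.

Lemma map_constin (f : nat -> nat) c s :
  {in s, forall x, f x = c} -> map f s = nseq (size s) c.
Proof.
elim: s => //= x s IH H; rewrite H ?inE ?eqxx // IH // => y Hy.
by apply: H; rewrite inE Hy orbT.
Qed.

Lemma count_below i b : count (fun j => (j != i) && (j < b)) (iota 0 b) = b - (i < b).
Proof.
have -> : count (fun j => (j != i) && (j < b)) (iota 0 b) = count (predC1 i) (iota 0 b).
  by apply: eq_in_count => j; rewrite mem_iota; case/andP => _ H /=; rewrite H andbT.
have := count_predC (pred1 i) (iota 0 b).
rewrite count_uniq_mem ?iota_uniq // mem_iota size_iota /=.
rewrite add0n; move=> H; have E : count (predC1 i) (iota 0 b) = count (predC (pred1 i)) (iota 0 b) by []. rewrite E; case: (i < b) H => /= H; lia.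
Qed.

Lemma count_deg n i b : b <= n ->
  #|[pred j : 'I_n | (val j != i) && (val j < b)]| = b - (i < b).
Proof.
move=> Hb; rewrite (@card_ord_count n (fun j => (j != i) && (j < b))).
rewrite -(subnKC Hb) iotaD count_cat count_below.
rewrite (@eq_in_count _ _ pred0) ?count_pred0 ?addn0 //.
move=> j; rewrite mem_iota; case/andP => H _ /=; by rewrite ltnNge H andbF.
Qed.

Definition Aa (k r s i : nat) : nat :=
  if i < k then k+1+r+s else if i == k then k+r+1 else if i <= k+r then k+1 else k.
Definition Ff (k r s i : nat) : nat :=
  if i < k then k+r+s else if i == k then k+r else if i <= k+r then k+1 else k.

Lemma Aa_sym k r s i j : i < k+1+r+s -> i != j -> j < Aa k r s i -> i < Aa k r s j.
Proof. rewrite /Aa; do !case: ifP; lia. Qed.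

Lemma Aa_le k r s i : Aa k r s i <= k+1+r+s.
Proof. rewrite /Aa; do !case: ifP; lia. Qed.

Lemma Ff_eq k r s i : i < k+1+r+s -> Ff k r s i = Aa k r s i - (i < Aa k r s i).
Proof. rewrite /Aa /Ff; do !case: ifP; lia. Qed.

Lemma Ff_anti k r s i j : i <= j -> Ff k r s j <= Ff k r s i.
Proof. rewrite /Ff; do !case: ifP; lia. Qed.

Lemma Ff_pos k r s i : 0 < k -> 0 < Ff k r s i.
Proof. rewrite /Ff; do !case: ifP; lia. Qed.

Lemma Ff_sum k r s : sumn (map (Ff k r s) (iota 0 (k+1+r+s))) =
  k * (k+r+s) + (k+r) + r * (k+1) + s * k.
Proof.
rewrite iotaD iotaD iotaD !map_cat !sumn_cat.
rewrite (@map_constin _ (k+r+s)); last by move=> x; rewrite mem_iota /Ff; do !case: ifP; lia.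
rewrite (@map_constin _ (k+r)); last by move=> x; rewrite mem_iota /Ff; do !case: ifP; lia.
rewrite (@map_constin _ (k+1)); last by move=> x; rewrite mem_iota /Ff; do !case: ifP; lia.
rewrite (@map_constin _ k); last by move=> x; rewrite mem_iota /Ff; do !case: ifP; lia.
rewrite !sumn_nseq !size_iota; lia.
Qed.

Lemma exists_krs n E : 1 < n -> n - 1 <= E -> 2 * E <= n * (n - 1) ->
  exists k r s, [/\ 0 < k, n = k+1+r+s & 2 * E = k * (k+r+s) + (k+r) + r * (k+1) + s * k].
Proof.
move=> Hn.
elim: E => [|E IH] HE HE2.
  exists 1, 0, (n-2); split; lia.
have [HE'|HE'] := ltnP (n-1) E.+1; last first.
  have -> : E.+1 = n - 1 by lia.
  exists 1, 0, (n-2); split; lia.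
have [k [r [s [Hk Hn' HS]]]] := IH ltac:(lia) ltac:(lia).
case: s Hn' HS => [|s] Hn' HS.
  case: r Hn' HS => [|[|r]] Hn' HS.
  - subst n; nia.
  - subst n; nia.
  exists k.+1, 1, r; split; [lia|lia|]. subst n; nia.
exists k, r.+1, s; split; [lia|lia|]. subst n; nia.
Qed.

Fixpoint Lay (T : finType) (e : rel T) (r : T) (m : nat) : {set T} :=
  if m is m'.+1 then Lay T e r m' :|: [set y | [exists x in Lay T e r m', e x y]]
  else [set r].

Lemma Lay_step (T : finType) (e : rel T) r m x y :
  x \in Lay T e r m -> e x y -> y \in Lay T e r m.+1.
Proof.
move=> Hx Hxy /=; rewrite in_setU; apply/orP; right.
by rewrite inE; apply/existsP; exists x; rewrite Hx Hxy.
Qed.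

Lemma Lay_path (T : finType) (e : rel T) r p : forall x m,
  path e x p -> x \in Lay T e r m -> last x p \in Lay T e r (m + size p).
Proof.
elim: p => [|y p IH] x m /=; first by rewrite addn0.
case/andP => Hxy Hp Hx; rewrite addnS -addSn; apply: IH => //.
exact: (Lay_step T e r m x y Hx Hxy).
Qed.

Lemma Lay_ex (T : finType) (e : rel T) r v :
  connect e r v -> exists m, v \in Lay T e r m.
Proof.
case/connectP => p Hp ->; exists (0 + size p); apply: Lay_path => //.
by rewrite /= inE.
Qed.

Definition Dist (T : finType) (e : rel T) r (conn : forall x y, connect e x y) (v : T) :=
  ex_minn (Lay_ex T e r v (conn r v)).

Lemma Dist_spec (T : finType) (e : rel T) r conn v :
  v \in Lay T e r (@Dist T e r conn v) /\ forall m, v \in Lay T e r m -> @Dist T e r conn v <= m.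
Proof. rewrite /Dist; case: ex_minnP => m Hm Hmin; split => //. Qed.

Lemma Dist_par (T : finType) (e : rel T) r conn v :
  symmetric e -> v != r -> exists u, e v u && (@Dist T e r conn u < @Dist T e r conn v).
Proof.
move=> Hsym Hvr.
have [H1 H2] := Dist_spec T e r conn v.
move: H1 H2; case: (Dist T e r conn v) => [|m] /=.
  by rewrite inE (negbTE Hvr).
rewrite in_setU => /orP[Hv Hmin|Hv Hmin].
  by have := Hmin _ Hv; rewrite ltnn.
move: Hv; rewrite inE => /existsP[x /andP[Hx Hxv]].
exists x; rewrite Hsym Hxv /=.
have [_ Hx2] := Dist_spec T e r conn x.
by rewrite ltnS Hx2.
Qed.

Definition Par (T : finType) (e : rel T) r conn (v : T) :=
  odflt v [pick u | e v u && (@Dist T e r conn u < @Dist T e r conn v)].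

Lemma Par_spec (T : finType) (e : rel T) r conn v :
  symmetric e -> v != r ->
  e v (@Par T e r conn v) && (Dist T e r conn (Par T e r conn v) < Dist T e r conn v).
Proof.
move=> Hsym Hvr; rewrite /Par; case: pickP => [u Hu|H] //=.
have [u Hu] := Dist_par T e r conn v Hsym Hvr.
by rewrite H in Hu.
Qed.

Lemma edge_bound (T : finType) (e : rel T) (r : T) :
  symmetric e -> (forall x y, connect e x y) ->
  2 * (#|T| - 1) <= #|[set p : T * T | e p.1 p.2]|.
Proof.
move=> Hsym conn.
pose A := [set (v, Par T e r conn v) | v in [set~ r]].
pose B := [set (Par T e r conn v, v) | v in [set~ r]].
have cA : #|A| = #|T| - 1.
  rewrite card_imset ?cardsC1; first lia.
  by move=> x y [].
have cB : #|B| = #|T| - 1.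
  rewrite card_imset ?cardsC1; first lia.
  by move=> x y [].
have AB : A :&: B = set0.
  apply/setP => p; rewrite !inE.
  apply/negP => /andP[/imsetP[v Hv ->] /imsetP[w Hw [E1 E2]]].
  rewrite !inE in Hv Hw.
  have := Par_spec T e r conn _ Hsym Hv; have := Par_spec T e r conn _ Hsym Hw.
  rewrite -E1 -E2 => /andP[_ H1] /andP[_ H2].
  have := ltn_trans H1 H2; by rewrite ltnn.
have sub : A :|: B \subset [set p : T * T | e p.1 p.2].
  apply/subsetP => p; rewrite in_setU => /orP[] /imsetP[v Hv ->]; rewrite !inE in Hv *.
    by case/andP: (Par_spec T e r conn _ Hsym Hv).
  by rewrite Hsym; case/andP: (Par_spec T e r conn _ Hsym Hv).
have := subset_leq_card sub.
rewrite cardsU AB cards0 subn0 cA cB; lia.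
Qed.

Lemma deg_sum (T : finType) (e : rel T) :
  \sum_(i : T) #|[pred j | e i j]| = #|[set p : T * T | e p.1 p.2]|.
Proof.
under eq_bigr => i _ do rewrite -sum1_card.
rewrite pair_big_dep sum1dep_card.
by apply: eq_card => p; rewrite !inE.
Qed.

Lemma sum_nth (d : seq nat) : \sum_(i < size d) nth 0 d i = sumn d.
Proof. by rewrite sumnE (big_nth 0) big_mkord. Qed.

Lemma size_le_sumn (d : seq nat) : all (fun x => 0 < x) d -> size d <= sumn d.
Proof. elim: d => //= x d IH /andP[Hx Hd]; have := IH Hd; lia. Qed.

Lemma star_connected (T : finType) (e : rel T) z :
  symmetric e -> (forall j, j != z -> e z j) -> forall x y, connect e x y.
Proof.
move=> Hsym H x y.
have Hxz : connect e x z.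
  case: (eqVneq x z) => [->|Hx]; first exact: connect0.
  by apply: connect1; rewrite Hsym H.
have Hzy : connect e z y.
  case: (eqVneq y z) => [->|Hy]; first exact: connect0.
  by apply: connect1; rewrite H.
exact: connect_trans Hxz Hzy.
Qed.

Lemma deg_full (T : finType) (e : rel T) z :
  irreflexive e -> #|[pred j | e z j]| = #|T|.-1 -> forall j, j != z -> e z j.
Proof.
move=> Hirr Hc j Hj.
have Hs : [pred j | e z j] \subset predC1 z.
  by apply/subsetP => i; rewrite !inE; apply: contraTneq => ->; rewrite Hirr.
have Hc' : #|[pred j | e z j]| = #|predC1 z| by rewrite cardC1.
have := subset_cardP Hc' Hs => /(_ j).
by rewrite !inE Hj.
Qed.

Theorem proposition1 (n N : nat) :
  0 < n -> ~~ odd N ->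
  ((exists d : seq nat, [/\ is_partition N d, size d = n & potentially_connected d]) <->
   (exists d : seq nat, [/\ is_partition N d, size d = n & forcibly_connected d])).
Proof.
move=> Hn Hodd; split; last first.
  case=> d [Hp Hs [[e He] Hf]]; exists d; split => //; split; first by exists e.
  by exists e; split => //; apply: Hf.
case=> d [Hp Hs [_ [e [[[Hsym Hirr] Hdeg] Hconn]]]].
move: Hp; rewrite /is_partition => /and3P[_ Hpos /eqP Hsum].
have Hsum2 : \sum_(i : 'I_(size d)) #|[pred j | e i j]| = N.
  by rewrite -Hsum -sum_nth; apply: eq_bigr => i _; exact: Hdeg.
have Hlow : 2 * (n - 1) <= N.
  have r : 'I_(size d) by rewrite Hs; exact: (Ordinal Hn).
  by have := edge_bound _ e r Hsym Hconn; rewrite card_ord -deg_sum Hsum2 Hs.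
have Hup : N <= n * (n - 1).
  rewrite -Hsum2 -Hs.
  apply: (@leq_trans (\sum_(i : 'I_(size d)) (size d).-1)).
    apply: leq_sum => i _.
    have Hsub : [pred j | e i j] \subset predC1 i.
      by apply/subsetP => j; rewrite !inE; apply: contraTneq => ->; rewrite Hirr.
    by have := subset_leq_card Hsub; rewrite cardC1 card_ord.
  rewrite sum_nat_const card_ord; lia.
have Hsz : n <= N by rewrite -Hsum -Hs; exact: size_le_sumn.
have Hn2 : 1 < n by nia.
have HN : N = 2 * N./2 by have := odd_double_half N; rewrite (negbTE Hodd) -mul2n; lia.
have [k [r [s [Hk En HS]]]] := exists_krs n (N./2) Hn2 ltac:(lia) ltac:(lia).
pose d' := map (Ff k r s) (iota 0 n).
have Hsz' : size d' = n by rewrite size_map size_iota.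
have Hnth : forall i, i < n -> nth 0 d' i = Ff k r s i.
  by move=> i Hi; rewrite (nth_map 0) ?size_iota // nth_iota.
pose e' : rel 'I_(size d') := fun i j =>
  [&& val i != val j, val j < Aa k r s i & val i < Aa k r s j].
have Hreal : realizes e'.
  split; first split.
  - move=> i j; rewrite /e'; apply/idP/idP => /and3P[H1 H2 H3]; apply/and3P; split => //;
      by rewrite eq_sym.
  - by move=> i; rewrite /e' eqxx.
  move=> i; have Hi : val i < n by rewrite -Hsz' ltn_ord.
  rewrite Hnth // (@eq_card _ _ [pred j : 'I_(size d') | (val j != val i) && (val j < Aa k r s i)]).
    rewrite count_deg; last by have := Aa_le k r s i; rewrite -En; lia.
    by rewrite Ff_eq // -En.
  move=> j; rewrite !inE /e'; apply/and3P/andP.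
    by case=> H1 H2 H3; split => //; rewrite eq_sym.
  case=> H1 H2; split => //; first by rewrite eq_sym.
  by apply: Aa_sym => //; [rewrite -En | rewrite eq_sym].
exists d'; split => //.
  rewrite /is_partition; apply/and3P; split.
  - rewrite sorted_map; apply: sub_sorted (iota_sorted 0 n) => i j Hij /=; exact: Ff_anti.
  - by apply/allP => x /mapP[i _ ->]; exact: Ff_pos.
  - apply/eqP; rewrite /d' En Ff_sum; lia.
split; first by exists e'.
move=> e'' [[Hsym'' Hirr''] Hdeg''].
have Hz : 0 < size d' by rewrite Hsz'; lia.
pose z : 'I_(size d') := Ordinal Hz.
apply: (star_connected _ e'' z Hsym''); apply: deg_full => //.
rewrite Hdeg'' Hnth /=; last lia.
rewrite card_ord Hsz' /Ff Hk; lia.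
Qed.
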